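(* Under the role-persistence and uniform-bound assumptions below, for any two initial states $\mathbf x,\mathbf y\in\{0,1\}^n$, let $\Pr(\mathbf X^t\mid\mathbf x)$ and $\Pr(\mathbf Y^t\mid\mathbf y)$ be the laws at time $t$ of the time-varying failure process started from $\mathbf X^0=\mathbf x$ and $\mathbf Y^0=\mathbf y$, respectively. Then for every $t\in\mathbb N$, $$d_{TV}\big(\Pr(\mathbf X^t\mid\mathbf x),\Pr(\mathbf Y^t\mid\mathbf y)\big)\le n\,\|\mathbf M_{t-1}\mathbf M_{t-2}\cdots\mathbf M_0\|,$$ where $\mathbf M_s=\mathbf A_s\mathbf W_s$ (the empty product for $t=0$ being $\mathbf I$), and consequently $$d_{TV}\big(\Pr(\mathbf X^t\mid\mathbf x),\Pr(\mathbf Y^t\mid\mathbf y)\big)\le n\,\bar\alpha^{\lfloor t/2\rfloor}.$$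
   Context: Fix a finite node set $\mathcal V$ with $n=|\mathcal V|$ and a sequence of directed graphs $G_t=(\mathcal V,\mathcal E_t)$, $t\in\mathbb N$. Let $\delta^t_{\mathrm{in}}(i)=\{j:(j,i)\in\mathcal E_t\}$. In $G_t$, a node $i$ is a pure obligee if it has no outgoing edge in $\mathcal E_t$, and a principal otherwise. For each $t$, $\mathbf W_t=(w^t_{ij})$ is an entrywise nonnegative $n\times n$ matrix with $w^t_{ij}>0$ only if $(j,i)\in\mathcal E_t$ and with every row sum at most $1$; $\mathbf A_t=\mathrm{diag}(\alpha_i^t)$ with $\alpha_i^t\in[0,1]$, and $\alpha_i^t=1$ whenever $i$ is a pure obligee in $G_t$. Each node has a fixed risk score $r_i\in[0,1]$. The time-varying failure process started at $\mathbf X^0$: for $t\ge0$, conditionally on $(\mathbf X^0,\dots,\mathbf X^t)$ the $X_i^{t+1}$, $i\in\mathcal V$, are independent with $X_i^{t+1}\sim\mathrm{Bernoulli}\big((1-\alpha_i^t)r_i+\alpha_i^t\sum_{j\in\delta^t_{\mathrm{in}}(i)}w^t_{ij}X_j^t\big)$. Role persistence: for every $i$ and $t$, $i$ is a pure obligee in $G_t$ if and only if it is a pure obligee in $G_{t+1}$. Uniform bound: there is $\bar\alpha\in(0,1)$ with $\alpha_i^t\le\bar\alpha$ for every $t$ and every node $i$ that is not a pure obligee in $G_t$. $d_{TV}(P,Q)=\max_{S\subseteq\{0,1\}^n}|P(S)-Q(S)|$; $\|\mathbf M\|$ is the induced $\ell_\infty$ matrix norm (maximum absolute row sum). *)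

(* Defs.v *)
From HB Require Import structures.
From mathcomp Require Import all_boot all_order all_algebra.
Set Implicit Arguments. Unset Strict Implicit. Unset Printing Implicit Defensive.
Import Order.TTheory GRing.Theory Num.Theory.
Local Open Scope ring_scope.

Definition state (n : nat) := {ffun 'I_n -> bool}.

Section Defs.
Variable R : realFieldType.
Variable n : nat.

Definition bern (p : R) (b : bool) : R := if b then p else 1 - p.

(* In-neighbourhood: E t j i means (j,i) is an edge of G_t *)
Definition pure_obligee (E : nat -> rel 'I_n) (t : nat) (i : 'I_n) : bool :=
  ~~ [exists k, E t i k].

(* Bernoulli parameter of X_i^{t+1} given X^t = y *)
Definition fail_prob (E : nat -> rel 'I_n) (W : nat -> 'M[R]_n)
  (alpha : nat -> 'I_n -> R) (r : 'I_n -> R) (t : nat) (y : state n) (i : 'I_n) : R :=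
  (1 - alpha t i) * r i
  + alpha t i * \sum_(j : 'I_n | E t j i) W t i j * (y j)%:R.

Definition trans E W alpha r (t : nat) (y z : state n) : R :=
  \prod_(i : 'I_n) bern (fail_prob E W alpha r t y i) (z i).

Fixpoint law E W alpha r (x : state n) (t : nat) : state n -> R :=
  match t with
  | 0 => fun z => if z == x then 1 else 0
  | t'.+1 => fun z => \sum_(y : state n) law E W alpha r x t' y * trans E W alpha r t' y z
  end.

Definition prob (P : state n -> R) (S : {set state n}) : R := \sum_(z in S) P z.

Definition dTV (P Q : state n -> R) : R :=
  \big[Num.max/0]_(S : {set state n}) `|prob P S - prob Q S|.

(* induced l_infinity norm: maximum absolute row sum *)
Definition normInf (M : 'M[R]_n) : R :=
  \big[Num.max/0]_(i : 'I_n) \sum_(j : 'I_n) `|M i j|.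

Definition Amx (alpha : nat -> 'I_n -> R) (s : nat) : 'M[R]_n :=
  diag_mx (\row_i alpha s i).

Definition Mmx (W : nat -> 'M[R]_n) (alpha : nat -> 'I_n -> R) (s : nat) : 'M[R]_n :=
  Amx alpha s *m W s.

Fixpoint Mprod (W : nat -> 'M[R]_n) (alpha : nat -> 'I_n -> R) (t : nat) : 'M[R]_n :=
  match t with
  | 0 => 1%:M
  | t'.+1 => Mmx W alpha t' *m Mprod W alpha t'
  end.

End Defs.

(* Main.v *)
Require Import Defs.
From HB Require Import structures.
From mathcomp Require Import all_boot all_order all_algebra.
Import Order.TTheory GRing.Theory Num.Theory.
Local Open Scope ring_scope.

Lemma Mmx_E (R : realFieldType) (n : nat) (W : nat -> 'M[R]_n) alpha s i j :
  Mmx W alpha s i j = alpha s i * W s i j.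
Proof. by rewrite /Mmx /Amx mul_diag_mx !mxE. Qed.

Lemma Mmx_ge0 (R : realFieldType) (n : nat) (W : nat -> 'M[R]_n) alpha
  (hW : forall t i j, 0 <= W t i j) (ha : forall t i, 0 <= alpha t i <= 1) s i j :
  0 <= Mmx W alpha s i j.
Proof. by rewrite Mmx_E mulr_ge0 //; case/andP: (ha s i). Qed.

Lemma Mprod_ge0 (R : realFieldType) (n : nat) (W : nat -> 'M[R]_n) alpha
  (hW : forall t i j, 0 <= W t i j) (ha : forall t i, 0 <= alpha t i <= 1) t i j :
  0 <= Mprod W alpha t i j.
Proof.
elim: t i j => [|t IH] i j /=; first by rewrite mxE ler0n.
rewrite mxE; apply: sumr_ge0 => k _; apply: mulr_ge0; last exact: IH.
exact: Mmx_ge0.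
Qed.

Lemma rs_Mmx_le1 (R : realFieldType) (n : nat) (W : nat -> 'M[R]_n) alpha
  (hW : forall t i j, 0 <= W t i j) (ha : forall t i, 0 <= alpha t i <= 1)
  (hW_row : forall t i, \sum_(j : 'I_n) W t i j <= 1) s i (c : R) :
  alpha s i <= c -> 0 <= c ->
  \sum_j Mmx W alpha s i j <= c.
Proof.
move=> hac hc0.
under eq_bigr => j _ do rewrite Mmx_E.
rewrite -mulr_sumr; case/andP: (ha s i) => a0 a1.
rewrite -[c]mulr1; apply: ler_pM => //; first by apply: sumr_ge0.
Qed.

Lemma rs_mul (R : realFieldType) (n : nat) (A B : 'M[R]_n) i :
  \sum_k (A *m B) i k = \sum_j A i j * \sum_k B j k.
Proof.
under eq_bigr => k _ do rewrite mxE.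
rewrite exchange_big /=; apply: eq_bigr => j _; by rewrite mulr_sumr.
Qed.

Lemma rs_pair (R : realFieldType) (n : nat)
  (E : nat -> rel 'I_n) (W : nat -> 'M[R]_n) (alpha : nat -> 'I_n -> R) (abar : R)
  (hW_nonneg : forall t i j, 0 <= W t i j)
  (hW_supp : forall t i j, 0 < W t i j -> E t j i)
  (hW_row : forall t i, \sum_(j : 'I_n) W t i j <= 1)
  (halpha_range : forall t i, 0 <= alpha t i <= 1)
  (halpha_obl : forall t i, pure_obligee E t i -> alpha t i = 1)
  (hpersist : forall t i, pure_obligee E t i = pure_obligee E t.+1 i)
  (habar : 0 < abar < 1)
  (hbound : forall t i, ~~ pure_obligee E t i -> alpha t i <= abar) s i :
  \sum_k (Mmx W alpha s.+1 *m Mmx W alpha s) i k <= abar.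
Proof.
case/andP: habar => ab0 ab1.
rewrite rs_mul.
case: (boolP (pure_obligee E s.+1 i)) => hob.
- have H : \sum_j Mmx W alpha s.+1 i j * \sum_k Mmx W alpha s j k <= \sum_j Mmx W alpha s.+1 i j * abar.
    apply: ler_sum => j _.
    rewrite Mmx_E.
    have [W0|Wpos] := eqVneq (W s.+1 i j) 0; first by rewrite W0 mulr0 !mul0r.
    have Wp : 0 < W s.+1 i j by rewrite lt_def Wpos hW_nonneg.
    have hE := hW_supp _ _ _ Wp.
    have hj : ~~ pure_obligee E s j.
      rewrite hpersist /pure_obligee negbK; apply/existsP; by exists i.
    apply: ler_wpM2l; first by apply: mulr_ge0; [case/andP: (halpha_range s.+1 i)|].
    apply: rs_Mmx_le1 => //; [exact: hbound | exact: ltW].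
  apply: le_trans H _.
  rewrite -mulr_suml -[X in _ <= X]mul1r; apply: ler_wpM2r; first exact: ltW.
  apply: rs_Mmx_le1 => //; by case/andP: (halpha_range s.+1 i).
- have H : \sum_j Mmx W alpha s.+1 i j * \sum_k Mmx W alpha s j k <= \sum_j Mmx W alpha s.+1 i j * 1.
    apply: ler_sum => j _; apply: ler_wpM2l; first exact: Mmx_ge0.
    apply: rs_Mmx_le1 => //; by case/andP: (halpha_range s j).
  apply: le_trans H _.
  under eq_bigr => j _ do rewrite mulr1.
  apply: rs_Mmx_le1 => //; [exact: hbound | exact: ltW].
Qed.
Lemma rs_Mprod (R : realFieldType) (n : nat)
  (E : nat -> rel 'I_n) (W : nat -> 'M[R]_n) (alpha : nat -> 'I_n -> R) (abar : R)
  (hW_nonneg : forall t i j, 0 <= W t i j)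
  (hW_supp : forall t i j, 0 < W t i j -> E t j i)
  (hW_row : forall t i, \sum_(j : 'I_n) W t i j <= 1)
  (halpha_range : forall t i, 0 <= alpha t i <= 1)
  (halpha_obl : forall t i, pure_obligee E t i -> alpha t i = 1)
  (hpersist : forall t i, pure_obligee E t i = pure_obligee E t.+1 i)
  (habar : 0 < abar < 1)
  (hbound : forall t i, ~~ pure_obligee E t i -> alpha t i <= abar) t :
  (forall i, \sum_k Mprod W alpha t i k <= abar ^+ t./2) /\
  (forall i, \sum_k Mprod W alpha t.+1 i k <= abar ^+ t.+1./2).
Proof.
have [ab0 ab1] := andP habar.
elim: t => [|t [IH1 IH2]].
  have H0 : forall i, \sum_k (1%:M : 'M[R]_n) i k <= 1.
    move=> i; rewrite (bigD1 i) //= big1 ?mxE ?eqxx ?addr0 // => k hk.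
    by rewrite mxE eq_sym (negbTE hk).
  split; first exact: H0.
  move=> i /=; rewrite mulmx1 expr0; apply: rs_Mmx_le1 => //.
  by case/andP: (halpha_range 0%N i).
split; first exact: IH2.
move=> i; rewrite [Mprod _ _ _]/= mulmxA rs_mul.
have -> : t.+2./2 = (t./2).+1 by [].
apply: le_trans (_ : \sum_j (Mmx W alpha t.+1 *m Mmx W alpha t) i j * abar ^+ t./2 <= _).
  apply: ler_sum => j _; apply: ler_wpM2l; last exact: IH1.
  rewrite mxE; apply: sumr_ge0 => k _; apply: mulr_ge0; exact: Mmx_ge0.
rewrite -mulr_suml exprS; apply: ler_wpM2r; first by apply: exprn_ge0; exact: ltW.
by apply: (@rs_pair _ _ E W alpha abar).
Qed.

Lemma normInf_le (R : realFieldType) (n : nat) (P : 'M[R]_n) c :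
  0 <= c -> (forall i j, 0 <= P i j) -> (forall i, \sum_k P i k <= c) -> normInf P <= c.
Proof.
move=> c0 hP hr; rewrite /normInf; apply: bigmax_le => // i _.
under eq_bigr => k _ do rewrite ger0_norm //; exact: hr.
Qed.

Lemma normInf_ge0 (R : realFieldType) (n : nat) (P : 'M[R]_n) : 0 <= normInf P.
Proof.
rewrite /normInf; apply: (big_ind (fun x => 0 <= x)) => //.
  by move=> a b ha hb; rewrite le_max ha.
by move=> i _; apply: sumr_ge0 => j _; exact: normr_ge0.
Qed.
From mathcomp Require Import lra.

Definition cpl (R : realFieldType) (p q : R) (u : bool * bool) : R :=
  match u with
  | (true, true) => Order.min p q
  | (true, false) => p - Order.min p q
  | (false, true) => q - Order.min p q
  | (false, false) => 1 - p - q + Order.min p q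
  end.
Arguments cpl {R}.

Lemma sum_pair (R : realFieldType) (F : bool * bool -> R) :
  \sum_(u : bool * bool) F u = F (true,true) + F (true,false) + F (false,true) + F (false,false).
Proof.
transitivity (\sum_(u : bool * bool | predT u.1 && predT u.2) F (u.1, u.2)).
  by apply: eq_bigr => -[a b].
rewrite -(pair_big predT predT (fun a b => F (a, b))) /= !big_bool /=.
by rewrite !addrA.
Qed.

Lemma cpl_ge0 (R : realFieldType) (p q : R) u :
  0 <= p <= 1 -> 0 <= q <= 1 -> 0 <= cpl p q u.
Proof.
move=> /andP[p0 p1] /andP[q0 q1].
by case: u => [[] []] /=; case: (leP p q) => h; lra.
Qed.

Lemma cpl_marg (R : realFieldType) (p q : R) (sel : bool) (v : bool) :
  \sum_(u : bool * bool) cpl p q u * ((if sel then u.1 else u.2) == v)%:R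
  = bern (if sel then p else q) v.
Proof.
rewrite sum_pair /= /bern.
by case: sel; case: v => /=; rewrite ?mulr1 ?mulr0 ?addr0 ?add0r; lra.
Qed.

Lemma cpl_sum1 (R : realFieldType) (p q : R) :
  \sum_(u : bool * bool) cpl p q u = 1.
Proof. by rewrite sum_pair /=; lra. Qed.

Lemma cpl_dis (R : realFieldType) (p q : R) :
  \sum_(u : bool * bool) cpl p q u * (u.1 != u.2)%:R = `|p - q|.
Proof.
rewrite sum_pair /= ?mulr1 ?mulr0 ?addr0 ?add0r.
case: (leP p q) => h.
  rewrite ler0_norm ?subr_le0 //; lra.
rewrite gtr0_norm ?subr_gt0 //; lra.
Qed.
Definition pst (n : nat) := {ffun 'I_n -> bool * bool}.
Definition fstS (n : nat) (f : pst n) : state n := [ffun i => (f i).1].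
Arguments fstS {n}.
Definition sndS (n : nat) (f : pst n) : state n := [ffun i => (f i).2].
Arguments sndS {n}.
Definition projS (n : nat) (sel : bool) (f : pst n) : state n :=
  if sel then fstS f else sndS f.
Arguments projS {n}.

Definition ckern (R : realFieldType) (n : nat) (E : nat -> rel 'I_n) (W : nat -> 'M[R]_n)
  (alpha : nat -> 'I_n -> R) (r : 'I_n -> R) (t : nat) (h f : pst n) : R :=
  \prod_i cpl (fail_prob E W alpha r t (fstS h) i) (fail_prob E W alpha r t (sndS h) i) (f i).

Arguments ckern {R n}.
Fixpoint Jt (R : realFieldType) (n : nat) (E : nat -> rel 'I_n) (W : nat -> 'M[R]_n)
  (alpha : nat -> 'I_n -> R) (r : 'I_n -> R) (x y : state n) (t : nat) : pst n -> R :=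
  match t with
  | 0 => fun f => if f == [ffun i => (x i, y i)] then 1 else 0
  | t'.+1 => fun f => \sum_h Jt R n E W alpha r x y t' h * ckern E W alpha r t' h f
  end.
Arguments Jt {R n}.

Lemma prod_nat_eq (R : realFieldType) (n : nat) (a b : state n) :
  ((a == b)%:R : R) = \prod_i ((a i == b i)%:R).
Proof.
case: (eqVneq a b) => [->|hab].
  by rewrite big1 // => i _; rewrite eqxx.
have [i hi] : exists i, a i != b i.
  apply/existsP; apply: contraR hab => /existsPn h; apply/eqP/ffunP => i.
  by move: (h i); rewrite negbK => /eqP.
by rewrite (bigD1 i) //= (negbTE hi) mul0r.
Qed.

Lemma sum_prod (R : realFieldType) (n : nat) (F : 'I_n -> bool * bool -> R) :
  \sum_(f : pst n) \prod_i F i (f i) = \prod_i \sum_u F i u.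
Proof. by rewrite bigA_distr_bigA. Qed.

Lemma fail_prob_range (R : realFieldType) (n : nat)
  (E : nat -> rel 'I_n) (W : nat -> 'M[R]_n) (alpha : nat -> 'I_n -> R) (r : 'I_n -> R)
  (hW_nonneg : forall t i j, 0 <= W t i j)
  (hW_row : forall t i, \sum_(j : 'I_n) W t i j <= 1)
  (halpha_range : forall t i, 0 <= alpha t i <= 1)
  (hr : forall i, 0 <= r i <= 1) t y i :
  0 <= fail_prob E W alpha r t y i <= 1.
Proof.
rewrite /fail_prob.
set S := \sum_(j | E t j i) _.
have S0 : 0 <= S by apply: sumr_ge0 => j _; apply: mulr_ge0 => //; exact: ler0n.
have S1 : S <= 1.
  apply: le_trans (hW_row t i).
  rewrite [X in _ <= X](bigID (fun j => E t j i)) /=.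
  rewrite -[S]addr0; apply: lerD.
    apply: ler_sum => j _; rewrite -[X in _ <= X]mulr1; apply: ler_wpM2l => //.
    by case: (y j).
  by apply: sumr_ge0.
have := halpha_range t i; have := hr i; move=> /andP[r0 r1] /andP[a0 a1].
apply/andP; split; nra.
Qed.
Lemma projS_E (n : nat) sel (f : pst n) i :
  projS sel f i = (if sel then (f i).1 else (f i).2).
Proof. by case: sel; rewrite /projS ffunE. Qed.

Lemma prod_if (R : realFieldType) (n : nat) (i0 : 'I_n) (a : R) :
  \prod_i (if i == i0 then a else 1) = a.
Proof. by rewrite (bigD1 i0) //= eqxx big1 ?mulr1 // => i /negbTE ->. Qed.

Lemma kern_marg (R : realFieldType) (n : nat)
  (E : nat -> rel 'I_n) (W : nat -> 'M[R]_n) (alpha : nat -> 'I_n -> R) (r : 'I_n -> R)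
  sel t (h : pst n) (z : state n) :
  \sum_(f | projS sel f == z) ckern E W alpha r t h f
  = trans E W alpha r t (projS sel h) z.
Proof.
transitivity (\sum_f ckern E W alpha r t h f * ((projS sel f == z)%:R)).
  by rewrite big_mkcond; apply: eq_bigr => f _; case: (projS sel f == z); rewrite ?mulr1 ?mulr0.
under eq_bigr => f _ do rewrite prod_nat_eq /ckern -big_split /=.
under eq_bigr => f _ do under eq_bigr => i _ do rewrite projS_E.
rewrite (@sum_prod _ _ (fun i u => cpl (fail_prob E W alpha r t (fstS h) i)
           (fail_prob E W alpha r t (sndS h) i) u * ((if sel then u.1 else u.2) == z i)%:R)).
rewrite /trans; apply: eq_bigr => i _.
by rewrite cpl_marg; case: sel.
Qed.

Lemma kern_dis (R : realFieldType) (n : nat)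
  (E : nat -> rel 'I_n) (W : nat -> 'M[R]_n) (alpha : nat -> 'I_n -> R) (r : 'I_n -> R)
  t (h : pst n) i0 :
  \sum_f ckern E W alpha r t h f * (((f i0).1 != (f i0).2)%:R)
  = `|fail_prob E W alpha r t (fstS h) i0 - fail_prob E W alpha r t (sndS h) i0|.
Proof.
under eq_bigr => f _ do rewrite -(@prod_if _ _ i0 (((f i0).1 != (f i0).2)%:R : R)) /ckern -big_split /=.
have H : forall f : pst n, \prod_i (cpl (fail_prob E W alpha r t (fstS h) i)
     (fail_prob E W alpha r t (sndS h) i) (f i) *
     (if i == i0 then (((f i0).1 != (f i0).2)%:R : R) else 1))
   = \prod_i (cpl (fail_prob E W alpha r t (fstS h) i)
     (fail_prob E W alpha r t (sndS h) i) (f i) *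
     (if i == i0 then (((f i).1 != (f i).2)%:R : R) else 1)).
  by move=> f; apply: eq_bigr => i _; case: eqP => // ->.
under eq_bigr => f _ do rewrite H.
rewrite (@sum_prod _ _ (fun i u => cpl (fail_prob E W alpha r t (fstS h) i)
     (fail_prob E W alpha r t (sndS h) i) u *
     (if i == i0 then ((u.1 != u.2)%:R : R) else 1))).
rewrite (bigD1 i0) //= [X in _ * X]big1 ?mulr1.
  by under eq_bigr => u _ do rewrite eqxx; rewrite cpl_dis.
move=> i /negbTE hi; under eq_bigr => u _ do rewrite hi mulr1.
exact: cpl_sum1.
Qed.

Lemma projS_f0 (n : nat) sel (x y : state n) :
  projS sel [ffun i => (x i, y i)] = if sel then x else y.
Proof. by case: sel; apply/ffunP => i; rewrite /projS !ffunE. Qed.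

Lemma J_marg (R : realFieldType) (n : nat)
  (E : nat -> rel 'I_n) (W : nat -> 'M[R]_n) (alpha : nat -> 'I_n -> R) (r : 'I_n -> R)
  (x y : state n) sel t z :
  \sum_(f | projS sel f == z) Jt E W alpha r x y t f
  = law E W alpha r (if sel then x else y) t z.
Proof.
elim: t z => [|t IH] z /=.
  set f0 := [ffun i => (x i, y i)].
  case: (boolP (projS sel f0 == z)) => hz.
    rewrite (bigD1 f0) //= eqxx big1 ?addr0.
      by move: hz; rewrite projS_f0 eq_sym => ->.
    by move=> f /andP[_ /negbTE ->].
  rewrite big1.
    by move: hz; rewrite projS_f0 eq_sym => /negbTE ->.
  move=> f hf; case: eqP => // ef.
  by move: hz; rewrite -ef hf.
rewrite exchange_big /=.
under eq_bigr => h _ do rewrite -mulr_sumr kern_marg.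
rewrite (partition_big (projS sel) predT) //=.
apply: eq_bigr => a _; rewrite -IH mulr_suml; apply: eq_bigr => h /eqP <-.
done.
Qed.
From mathcomp Require Import ring.
Lemma J_ge0 (R : realFieldType) (n : nat)
  (E : nat -> rel 'I_n) (W : nat -> 'M[R]_n) (alpha : nat -> 'I_n -> R) (r : 'I_n -> R)
  (hW_nonneg : forall t i j, 0 <= W t i j)
  (hW_row : forall t i, \sum_(j : 'I_n) W t i j <= 1)
  (halpha_range : forall t i, 0 <= alpha t i <= 1)
  (hr : forall i, 0 <= r i <= 1) x y t f :
  0 <= Jt E W alpha r x y t f.
Proof.
elim: t f => [|t IH] f /=; first by case: eqP.
apply: sumr_ge0 => h _; apply: mulr_ge0 => //.
apply: prodr_ge0 => i _; apply: cpl_ge0; exact: fail_prob_range.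
Qed.

Lemma fail_diff (R : realFieldType) (n : nat)
  (E : nat -> rel 'I_n) (W : nat -> 'M[R]_n) (alpha : nat -> 'I_n -> R) (r : 'I_n -> R)
  (hW_nonneg : forall t i j, 0 <= W t i j)
  (halpha_range : forall t i, 0 <= alpha t i <= 1) t (a b : state n) i :
  `|fail_prob E W alpha r t a i - fail_prob E W alpha r t b i|
  <= \sum_j Mmx W alpha t i j * ((a j != b j)%:R).
Proof.
rewrite /fail_prob.
set Sa := \sum_(j | E t j i) _. set Sb := \sum_(j | E t j i) _.
have -> : (1 - alpha t i) * r i + alpha t i * Sa - ((1 - alpha t i) * r i + alpha t i * Sb)
  = alpha t i * (Sa - Sb) by ring.
have [a0 a1] := andP (halpha_range t i).
rewrite normrM ger0_norm //.
under eq_bigr => j _ do rewrite Mmx_E -mulrA.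
rewrite -mulr_sumr; apply: ler_wpM2l => //.
rewrite /Sa /Sb -sumrB; apply: le_trans (ler_norm_sum _ _ _) _.
apply: le_trans (_ : \sum_(j | E t j i) W t i j * (a j != b j)%:R <= _).
  apply: ler_sum => j _; rewrite -mulrBr normrM ger0_norm //.
  apply: ler_wpM2l => //; by case: (a j); case: (b j); rewrite /= ?subrr ?normr0 ?subr0 ?normr1 ?sub0r ?normrN ?normr1.
rewrite [X in _ <= X](bigID (fun j => E t j i)) /= -[X in X <= _]addr0; apply: lerD => //.
by apply: sumr_ge0 => j _; apply: mulr_ge0.
Qed.

Definition dd (R : realFieldType) (n : nat)
  (E : nat -> rel 'I_n) (W : nat -> 'M[R]_n) (alpha : nat -> 'I_n -> R) (r : 'I_n -> R)
  x y t (i : 'I_n) : R :=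
  \sum_f Jt E W alpha r x y t f * (((f i).1 != (f i).2)%:R).
Arguments dd {R n}.

Lemma dd_bound (R : realFieldType) (n : nat)
  (E : nat -> rel 'I_n) (W : nat -> 'M[R]_n) (alpha : nat -> 'I_n -> R) (r : 'I_n -> R)
  (hW_nonneg : forall t i j, 0 <= W t i j)
  (hW_row : forall t i, \sum_(j : 'I_n) W t i j <= 1)
  (halpha_range : forall t i, 0 <= alpha t i <= 1)
  (hr : forall i, 0 <= r i <= 1) x y t i :
  dd E W alpha r x y t i <= \sum_k Mprod W alpha t i k.
Proof.
elim: t i => [|t IH] i.
  rewrite /dd /=; set f0 := [ffun i => (x i, y i)].
  rewrite (bigD1 f0) //= eqxx mul1r big1 ?addr0; last by move=> f /negbTE ->; rewrite mul0r.
  rewrite (bigD1 i) //= big1 ?mxE ?eqxx ?addr0 /f0 ?ffunE /=; first by case: (x i != y i).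
  by move=> k hk; rewrite mxE eq_sym (negbTE hk).
rewrite /dd /=.
under eq_bigr => f _ do rewrite mulr_suml.
rewrite exchange_big /=.
under eq_bigr => h _ do under eq_bigr => f _ do rewrite -mulrA.
under eq_bigr => h _ do rewrite -mulr_sumr kern_dis.
apply: le_trans (_ : \sum_h Jt E W alpha r x y t h *
   \sum_j Mmx W alpha t i j * (((h j).1 != (h j).2)%:R) <= _).
  apply: ler_sum => h _; apply: ler_wpM2l; first exact: J_ge0.
  apply: le_trans (@fail_diff _ _ E W alpha r hW_nonneg halpha_range t (fstS h) (sndS h) i) _.
  by apply: ler_sum => j _; rewrite !ffunE.
have -> : \sum_h Jt E W alpha r x y t h *
   \sum_j Mmx W alpha t i j * (((h j).1 != (h j).2)%:R)
  = \sum_j \sum_h Jt E W alpha r x y t h * (Mmx W alpha t i j * ((h j).1 != (h j).2)%:R).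
  rewrite exchange_big /=; apply: eq_bigr => h _; by rewrite mulr_sumr.
rewrite rs_mul; apply: ler_sum => j _.
have -> : \sum_h Jt E W alpha r x y t h * (Mmx W alpha t i j * ((h j).1 != (h j).2)%:R)
  = Mmx W alpha t i j * dd E W alpha r x y t j.
  by rewrite /dd mulr_sumr; apply: eq_bigr => h _; rewrite mulrCA.
apply: ler_wpM2l; first exact: Mmx_ge0.
exact: IH.
Qed.
Lemma prob_J (R : realFieldType) (n : nat)
  (E : nat -> rel 'I_n) (W : nat -> 'M[R]_n) (alpha : nat -> 'I_n -> R) (r : 'I_n -> R)
  (x y : state n) sel t (S : {set state n}) :
  prob (law E W alpha r (if sel then x else y) t) S
  = \sum_f Jt E W alpha r x y t f * ((projS sel f \in S)%:R).
Proof.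
rewrite /prob.
under eq_bigr => z _ do rewrite -J_marg.
transitivity (\sum_(f | projS sel f \in S) Jt E W alpha r x y t f); last first.
  by rewrite big_mkcond; apply: eq_bigr => f _; case: (_ \in _); rewrite ?mulr1 ?mulr0.
rewrite (partition_big (projS sel) (mem S)) //=.
apply: eq_bigr => z zS; apply: eq_bigl => f.
by case: eqP => [->|_]; rewrite ?andbF ?andbT.
Qed.

Lemma dd_ge0 (R : realFieldType) (n : nat)
  (E : nat -> rel 'I_n) (W : nat -> 'M[R]_n) (alpha : nat -> 'I_n -> R) (r : 'I_n -> R)
  (hW_nonneg : forall t i j, 0 <= W t i j)
  (hW_row : forall t i, \sum_(j : 'I_n) W t i j <= 1)
  (halpha_range : forall t i, 0 <= alpha t i <= 1)
  (hr : forall i, 0 <= r i <= 1) x y t i :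
  0 <= dd E W alpha r x y t i.
Proof.
apply: sumr_ge0 => f _; apply: mulr_ge0; [exact: J_ge0 | exact: ler0n].
Qed.

Lemma dTV_dd (R : realFieldType) (n : nat)
  (E : nat -> rel 'I_n) (W : nat -> 'M[R]_n) (alpha : nat -> 'I_n -> R) (r : 'I_n -> R)
  (hW_nonneg : forall t i j, 0 <= W t i j)
  (hW_row : forall t i, \sum_(j : 'I_n) W t i j <= 1)
  (halpha_range : forall t i, 0 <= alpha t i <= 1)
  (hr : forall i, 0 <= r i <= 1) x y t :
  dTV (law E W alpha r x t) (law E W alpha r y t) <= \sum_i dd E W alpha r x y t i.
Proof.
rewrite /dTV; apply: bigmax_le => [|S _].
  by apply: sumr_ge0 => i _; exact: dd_ge0.
have := @prob_J _ _ E W alpha r x y true t S; have := @prob_J _ _ E W alpha r x y false t S.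
rewrite /= => -> ->.
rewrite -sumrB.
apply: le_trans (ler_norm_sum _ _ _) _.
rewrite /dd exchange_big /=.
apply: ler_sum => f _; rewrite -mulrBr -mulr_sumr normrM ger0_norm; last exact: J_ge0.
apply: ler_wpM2l; first exact: J_ge0.
rewrite /projS.
case: (eqVneq (fstS f) (sndS f)) => [->|hne].
  by rewrite subrr normr0; apply: sumr_ge0 => i _; exact: ler0n.
have [i hi] : exists i, (f i).1 != (f i).2.
  apply/existsP; apply: contraR hne => /existsPn h; apply/eqP/ffunP => i.
  by move: (h i); rewrite negbK !ffunE => /eqP.
rewrite (bigD1 i) //= hi -[X in X <= _]addr0; apply: lerD.
  by case: (fstS f \in S); case: (sndS f \in S); rewrite /= ?subrr ?normr0 ?subr0 ?normr1 ?sub0r ?normrN ?normr1.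
by apply: sumr_ge0 => k _; exact: ler0n.
Qed.
Theorem mainTheorem14 (R : realFieldType) (n : nat)
  (E : nat -> rel 'I_n) (W : nat -> 'M[R]_n) (alpha : nat -> 'I_n -> R)
  (r : 'I_n -> R) (abar : R)
  (hW_nonneg : forall t i j, 0 <= W t i j)
  (hW_supp : forall t i j, 0 < W t i j -> E t j i)
  (hW_row : forall t i, \sum_(j : 'I_n) W t i j <= 1)
  (halpha_range : forall t i, 0 <= alpha t i <= 1)
  (halpha_obl : forall t i, pure_obligee E t i -> alpha t i = 1)
  (hr : forall i, 0 <= r i <= 1)
  (hpersist : forall t i, pure_obligee E t i = pure_obligee E t.+1 i)
  (habar : 0 < abar < 1)
  (hbound : forall t i, ~~ pure_obligee E t i -> alpha t i <= abar)
  (x y : state n) (t : nat) :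
  dTV (law E W alpha r x t) (law E W alpha r y t)
    <= n%:R * normInf (Mprod W alpha t)
  /\ dTV (law E W alpha r x t) (law E W alpha r y t) <= n%:R * abar ^+ t./2.
Proof.
have H1 : dTV (law E W alpha r x t) (law E W alpha r y t)
    <= n%:R * normInf (Mprod W alpha t).
  apply: le_trans (@dTV_dd _ _ E W alpha r hW_nonneg hW_row halpha_range hr x y t) _.
  apply: le_trans (_ : \sum_(i : 'I_n) normInf (Mprod W alpha t) <= _).
    apply: ler_sum => i _; apply: le_trans (@dd_bound _ _ E W alpha r hW_nonneg hW_row halpha_range hr x y t i) _.
    rewrite /normInf; apply: le_trans (le_bigmax _ _ i).
    by apply: ler_sum => k _; rewrite ger0_norm //; exact: Mprod_ge0.
  by rewrite sumr_const card_ord mulr_natl.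
split => //.
apply: le_trans H1 _; apply: ler_wpM2l; first exact: ler0n.
have [ab0 _] := andP habar.
apply: normInf_le; first by apply: exprn_ge0; exact: ltW.
  by move=> i j; exact: Mprod_ge0.
by case: (@rs_Mprod _ _ E W alpha abar hW_nonneg hW_supp hW_row halpha_range halpha_obl hpersist habar hbound t).
Qed.
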